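(* Let $k$ be a positive integer. Let $T_1,T_2$ be disjoint subsets of $\{0,1,\ldots,k\}$ such that no $t\in T_1$ satisfies $t-1\in T_2$. Let $$A=\left\{\left(3^{a_1}+\cdots+3^{a_m}\right)+2\left(3^{b_1}+\cdots+3^{b_n}\right)\mid \{a_1,\ldots,a_m\}\subseteq T_1,\ \{b_1,\ldots,b_n\}\subseteq T_2\right\}.$$ Then $S(A)$ is an independent Stanley sequence.
   Context: A set of non-negative integers is 3-free if no three of its elements form an arithmetic progression. For a finite 3-free set $A=\{a_0<\cdots<a_k\}$ of non-negative integers, the Stanley sequence $S(A)=(a_n)_{n\ge0}$ is the increasing sequence with initial terms $a_0,\ldots,a_k$ in which each subsequent $a_{n+1}$ is the smallest integer greater than $a_n$ such that $\{a_0,\ldots,a_{n+1}\}$ is 3-free. A Stanley sequence $(a_n)$ is independent if there is a constant $\lambda$ such that for all sufficiently large $k$: $a_{2^k+i}=a_{2^k}+a_i$ for all $0\le i<2^k$, and $a_{2^k}=2a_{2^k-1}-\lambda+1$. *)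

(* Defs.v *)
From mathcomp Require Import all_boot all_order all_algebra.
Set Implicit Arguments. Unset Strict Implicit. Unset Printing Implicit Defensive.
Import GRing.Theory Num.Theory.

Definition threefree (P : nat -> Prop) : Prop :=
  forall x y z, x < y -> y < z -> P x -> P y -> P z -> x + z <> 2 * y.

Definition prefix_set (a : nat -> nat) (n : nat) : nat -> Prop :=
  fun x => exists2 i, i <= n & a i = x.

Definition stanley_of (A : nat -> Prop) (a : nat -> nat) : Prop :=
  exists k : nat,
    (forall i j, i < j <= k -> a i < a j) /\
    (forall x, A x <-> prefix_set a k x) /\
    (forall n, k <= n ->
       [/\ a n < a n.+1,
           threefree (prefix_set a n.+1) &
           forall y, a n < y -> y < a n.+1 ->
             ~ threefree (fun x => prefix_set a n x \/ x = y)]).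

Definition independent (a : nat -> nat) : Prop :=
  exists (lambda : int) (K : nat), forall k, K <= k ->
    let p := (2 ^ k)%N in
    (forall i, i < p -> a (p + i) = a p + a i) /\
    (Posz (a p) = 2 * Posz (a p.-1) - lambda + 1)%R.

Definition setA (k : nat) (T1 T2 : {set 'I_k.+1}) : nat -> Prop :=
  fun x => exists S1 S2 : {set 'I_k.+1},
    [/\ S1 \subset T1, S2 \subset T2 &
        x = \sum_(i in S1) 3 ^ (val i) + 2 * \sum_(i in S2) 3 ^ (val i)].

(* Main.v *)
Require Import Defs.
From mathcomp Require Import all_boot all_order all_algebra.
From mathcomp Require Import zify.
Set Implicit Arguments. Unset Strict Implicit. Unset Printing Implicit Defensive.

Fixpoint dD (f x : nat) : bool :=
  if f is f'.+1 then (x %% 3 != 2) && dD f' (x %/ 3) else true.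
Definition inD x := dD x x.

Lemma dD_stable f g x : x <= f -> x <= g -> dD f x = dD g x.
Proof.
elim: f g x => [|f IH] [|g] x /=.
- by [].
- move=> Hx _; have -> : x = 0 by lia.
  rewrite mod0n div0n /=. clear; elim: g => //.
- move=> _ Hx; have -> : x = 0 by lia.
  rewrite mod0n div0n /=. clear; elim: f => //.
- move=> Hf Hg; congr (_ && _); apply: IH; lia.
Qed.

Lemma inD3 y r : r < 3 -> inD (3*y + r) = (r != 2) && inD y.
Proof.
move=> Hr; rewrite /inD.
case E: (3*y + r) => [|f].
- have -> : y = 0 by lia. have -> : r = 0 by lia. by [].
- rewrite /= -E.
  have Hm : (3*y + r) %% 3 = r by lia.
  have Hd : (3*y + r) %/ 3 = y by lia.
  rewrite Hm Hd; congr (_ && _); apply: dD_stable; lia.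
Qed.

Lemma inD30 y : inD (3*y) = inD y.
Proof. by rewrite -[3*y]addn0 inD3. Qed.
Lemma inD31 y : inD (3*y+1) = inD y.
Proof. by rewrite inD3. Qed.
Lemma inD32 y : inD (3*y+2) = false.
Proof. by rewrite inD3. Qed.

Lemma inD0 : inD 0. Proof. by []. Qed.
Lemma inD1 : inD 1. Proof. by []. Qed.

Lemma inD_ind (P : nat -> Prop) :
  (forall n, (forall m, m < n -> P m) -> P n) -> forall n, P n.
Proof.
move=> H n; elim: n.+1 {-2}n (ltnSn n) => [|N IH] m Hm; first by [].
apply: H => k Hk; apply: IH; lia.
Qed.

Lemma divmod3 x : x = 3 * (x %/ 3) + x %% 3 /\ x %% 3 < 3.
Proof. split; lia. Qed.

Lemma phi_dec u : exists p0 p1, [/\ inD p0, inD p1, p0 + u = 2 * p1, p1 <= u &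
   (~~ inD u -> p1 < u)].
Proof.
elim/inD_ind: u => u IH.
case: (posnP u) => [->|Hu]; first by exists 0, 0.
have [q [r [Hx Hr]]] : exists q r, u = 3 * q + r /\ r < 3.
{ exists (u %/ 3), (u %% 3); lia. }
have Hq : q < u by lia.
have [p0 [p1 [H0 H1 Hs Hl Hn]]] := IH q Hq.
have Huq : inD u = (r != 2) && inD q by rewrite Hx inD3.
rewrite Huq {Huq IH}.
have [Er|[Er|Er]] : r = 0 \/ r = 1 \/ r = 2 by lia.
- exists (3 * p0), (3 * p1); rewrite !inD30 Er /=.
  split=> //; try lia; move=> /Hn; lia.
- exists (3 * p0 + 1), (3 * p1 + 1); rewrite !inD31 Er /=.
  split=> //; try lia; move=> /Hn; lia.
- exists (3 * p0), (3 * p1 + 1); rewrite inD30 inD31 Er /=.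
  split=> //; lia.
Qed.

Lemma inD_3free x y z : inD x -> inD y -> inD z -> x + z = 2 * y -> x = z.
Proof.
elim/inD_ind: y x z => y IH x z.
have [Hx Hxr] := divmod3 x; have [Hy Hyr] := divmod3 y; have [Hz Hzr] := divmod3 z.
rewrite {1}Hx {1}Hy {1}Hz !inD3 //.
case/andP=> Rx Dx /andP[Ry Dy] /andP[Rz Dz] E.
have Er : x %% 3 + z %% 3 = 2 * (y %% 3).
{ move: Rx Ry Rz; rewrite !neq_ltn. lia. }
have Eq : x %/ 3 + z %/ 3 = 2 * (y %/ 3) by lia.
case: (posnP y) => Hy0.
- have : x + z = 0 by lia. lia.
- have := IH (y %/ 3) ltac:(lia) _ _ Dx Dy Dz Eq. move: Rx Ry Rz; rewrite !neq_ltn. lia.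
Qed.

Lemma inD_shift J x : x < 3^J -> inD (3^J + x) = inD x.
Proof.
elim: J x => [|J IH] x Hx.
- have -> : x = 0 by rewrite expn0 in Hx; lia. by [].
- have [q [r [Ex Hr]]] : exists q r, x = 3 * q + r /\ r < 3.
  { exists (x %/ 3), (x %% 3); lia. }
  have Hq : q < 3^J by rewrite expnS in Hx; lia.
  have -> : 3^J.+1 + x = 3 * (3^J + q) + r by rewrite expnS; lia.
  by rewrite Ex !inD3 // IH.
Qed.

Lemma inD_bound J x : inD x -> x < 3^J -> 2 * x < 3^J.
Proof.
elim: J x => [|J IH] x Dx Hx.
- rewrite expn0 in Hx *; lia.
- have [q [r [Ex Hr]]] : exists q r, x = 3 * q + r /\ r < 3.
  { exists (x %/ 3), (x %% 3); lia. }
  move: Dx; rewrite Ex inD3 // => /andP[Hr2 Dq].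
  have Hq : q < 3^J by rewrite expnS in Hx; lia.
  have := IH q Dq Hq. rewrite expnS. move: Hr2; rewrite neq_ltn. lia.
Qed.

Lemma inD_gap J x : inD x -> 2 * 3^J <= x -> x < 3^J.+1 -> False.
Proof.
elim: J x => [|J IH] x Dx H1 H2.
- rewrite expn0 expn1 in H1 H2. have Ex : x = 2 by lia. by rewrite Ex in Dx.
- have [q [r [Ex Hr]]] : exists q r, x = 3 * q + r /\ r < 3.
  { exists (x %/ 3), (x %% 3); lia. }
  move: Dx; rewrite Ex inD3 // => /andP[Hr2 Dq].
  apply: (IH q Dq); move: H1 H2; rewrite !expnS Ex; lia.
Qed.

Lemma count_iota3 (P : pred nat) X :
  count P (iota 0 (3 * X)) = count (fun q => P (3 * q)) (iota 0 X)
    + count (fun q => P (3 * q + 1)) (iota 0 X) + count (fun q => P (3 * q + 2)) (iota 0 X).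
Proof.
elim: X => [|X IH]; first by rewrite muln0.
rewrite (_ : 3 * X.+1 = 3 * X + 3); last by rewrite mulnS addnC.
rewrite iotaD count_cat IH -[X.+1]addn1 !iotaD !count_cat add0n /=.
rewrite !addn0 !addn1 !add0n -[(3 * X).+2]addn2.
move: (count _ _) (count _ _) (count _ _) => a b c.
move: (nat_of_bool (P (3 * X))) (nat_of_bool (P (3 * X).+1)) (nat_of_bool (P (3 * X + 2))) => p q r.
lia.
Qed.

Lemma count_D J : count inD (iota 0 (3^J)) = 2^J.
Proof.
elim: J => [|J IH] //.
rewrite expnS count_iota3 (@eq_count _ (fun q => inD (3 * q)) inD inD30)
  (@eq_count _ (fun q => inD (3 * q + 1)) inD inD31)
  (@eq_count _ (fun q => inD (3 * q + 2)) pred0 inD32) count_pred0 IH expnS.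
lia.
Qed.

Lemma count_shift (P : pred nat) m n :
  count P (iota m n) = count (fun x => P (m + x)) (iota 0 n).
Proof. rewrite -{1}(addn0 m) iotaDl count_map. by apply: eq_count. Qed.

Lemma count_split (P : pred nat) m n :
  count P (iota 0 (m + n)) = count P (iota 0 m) + count (fun x => P (m + x)) (iota 0 n).
Proof. by rewrite iotaD count_cat add0n (count_shift P m n). Qed.

Definition isSt (A G : nat -> bool) (t : nat) : Prop :=
  [/\ (forall x, x <= t -> G x = A x),
      A t, (forall x, A x -> x <= t),
      (forall x y z, G x -> G y -> G z -> x + z = 2 * y -> x = z) &
      (forall y, t < y -> ~~ G y -> exists x w, [/\ G x, G w, w < y & x + y = 2 * w])].

Definition Q1 (G : nat -> bool) (t : nat) : Prop :=
  forall u, exists b a, [/\ inD b, b <= u, G a & a + u = t + 2 * b].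

Definition opG (c : nat) (G : nat -> bool) (t : nat) (x : nat) : bool :=
  if c == 0 then ((x %% 3 == 0) && G (x %/ 3)) ||
                 ((x %% 3 == 1) && (t <= x %/ 3) && inD (x %/ 3 - t))
  else ((x %% 3 == 0) || (x %% 3 == c)) && G (x %/ 3).

Definition opA (c : nat) (A : nat -> bool) (x : nat) : bool :=
  ((x %% 3 == 0) || ((c != 0) && (x %% 3 == c))) && A (x %/ 3).

Lemma dm3 x : exists q r, x = 3 * q + r /\ r < 3.
Proof. exists (x %/ 3), (x %% 3); lia. Qed.

Lemma opGE c G t q r : r < 3 -> opG c G t (3 * q + r) =
  if c == 0 then ((r == 0) && G q) || ((r == 1) && (t <= q) && inD (q - t))
  else ((r == 0) || (r == c)) && G q.
Proof.
move=> Hr; have Hm : (3 * q + r) %% 3 = r by lia.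
have Hd : (3 * q + r) %/ 3 = q by lia.
by rewrite /opG Hm Hd.
Qed.

Lemma opAE c A q r : r < 3 -> opA c A (3 * q + r) =
  ((r == 0) || ((c != 0) && (r == c))) && A q.
Proof.
move=> Hr; have Hm : (3 * q + r) %% 3 = r by lia.
have Hd : (3 * q + r) %/ 3 = q by lia.
by rewrite /opA Hm Hd.
Qed.

Lemma opc_St c A G t : (c == 1) || (c == 2) -> isSt A G t ->
  isSt (opA c A) (opG c G t) (3 * t + c).
Proof.
move=> Hc [Hi HAt HAm H3 Hcov].
have Hc0 : (c == 0) = false by case/orP: Hc => /eqP ->.
have Hc0' : (c != 0) = true by rewrite Hc0.
have Hcr : c < 3 by case/orP: Hc => /eqP ->.
have HGt : G t by rewrite Hi.
split.
- move=> x; have [q [r [-> Hr]]] := dm3 x.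
  rewrite opGE // opAE // Hc0 /= => Hx.
  case E: ((r == 0) || (r == c)) => //=.
  apply: Hi. move: E => /orP[/eqP Er|/eqP Er]; lia.
- by rewrite opAE // Hc0 eqxx orbT.
- move=> x; have [q [r [-> Hr]]] := dm3 x.
  rewrite opAE // Hc0 /= => /andP[E /HAm]. move: E => /orP[/eqP Er|/eqP Er]; lia.
- move=> x y z.
  have [qx [rx [-> Hrx]]] := dm3 x; have [qy [ry [-> Hry]]] := dm3 y;
  have [qz [rz [-> Hrz]]] := dm3 z.
  rewrite !opGE // Hc0 /= => /andP[Ex Gx] /andP[Ey Gy] /andP[Ez Gz] E.
  have Hr : rx = ry /\ rz = ry.
  { move: Ex Ey Ez Hc => /orP[/eqP ?|/eqP ?] /orP[/eqP ?|/eqP ?] /orP[/eqP ?|/eqP ?]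
      /orP[/eqP ?|/eqP ?]; subst; lia. }
  case: Hr => ??; subst.
  have := H3 _ _ _ Gx Gy Gz ltac:(lia). lia.
- move=> y; have [q [r [-> Hr]]] := dm3 y.
  rewrite opGE // Hc0 /= => Hy HG.
  case E: ((r == 0) || (r == c)).
  +
    rewrite E /= in HG.
    have Hq : t < q by move: E Hc => /orP[/eqP ?|/eqP ?] /orP[/eqP ?|/eqP ?]; subst; lia.
    have [a [b [Ga Gb Hb Eab]]] := Hcov q Hq HG.
    exists (3 * a + r), (3 * b + r); rewrite !opGE // Hc0 /= E Ga Gb; split=> //; lia.
  +
    move: Hc => /orP[/eqP Ec|/eqP Ec]; subst c.
    * have Er : r = 2.
      { move: E; have : r = 0 \/ r = 1 \/ r = 2 by lia. by case=> [->|[->|->]]. }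
      subst r.
      case Gq: (G q).
      -- exists (3 * q + 0), (3 * q + 1); rewrite !opGE //= Gq; split=> //; lia.
      -- have Hq : t < q.
         { case: (ltngtP t q) => // [Hlt|Het]; first lia. by subst; rewrite HGt in Gq. }
         have [a [b [Ga Gb Hb Eab]]] := Hcov q Hq (negbT Gq).
         exists (3 * a + 0), (3 * b + 1); rewrite !opGE //= Ga Gb; split=> //; lia.
    * have Er : r = 1.
      { move: E; have : r = 0 \/ r = 1 \/ r = 2 by lia. by case=> [->|[->|->]]. }
      subst r.
      have Hq : t < q by lia.
      case Gq: (G q.-1).
      -- exists (3 * q.-1 + 0), (3 * q.-1 + 2); rewrite !opGE //= Gq; split=> //; lia.
      -- have Hq1 : t < q.-1.
         { case: (ltngtP t q.-1) => // [Hlt|Het]; first lia. by rewrite -Het HGt in Gq. }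
         have [a [b [Ga Gb Hb Eab]]] := Hcov q.-1 Hq1 (negbT Gq).
         exists (3 * a + 0), (3 * b + 2); rewrite !opGE //= Ga Gb; split=> //; lia.
Qed.

Lemma op0_St A G t : isSt A G t -> Q1 G t -> isSt (opA 0 A) (opG 0 G t) (3 * t).
Proof.
move=> [Hi HAt HAm H3 Hcov] HQ.
split.
- move=> x; have [q [r [-> Hr]]] := dm3 x.
  rewrite opGE // opAE //= => Hx.
  have HR : r = 0 \/ r = 1 \/ r = 2 by lia.
  case: HR => [Er|[Er|Er]]; subst r.
  + rewrite /= orbF; apply: Hi; lia.
  + rewrite /= (_ : (t <= q) = false) //; apply/negbTE; rewrite -ltnNge; lia.
  + by [].
- by rewrite -[3 * t]addn0 opAE.
- move=> x; have [q [r [-> Hr]]] := dm3 x.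
  rewrite opAE //= orbF => /andP[/eqP -> /HAm]; lia.
- move=> x y z.
  have [qx [rx [-> Hrx]]] := dm3 x; have [qy [ry [-> Hry]]] := dm3 y;
  have [qz [rz [-> Hrz]]] := dm3 z.
  rewrite !opGE //= => Hx Hy Hz E.
  move: Hx => /orP[/andP[/eqP ? Gx]|/andP[/andP[/eqP ? Tx] Dx]];
  move: Hy => /orP[/andP[/eqP ? Gy]|/andP[/andP[/eqP ? Ty] Dy]];
  move: Hz => /orP[/andP[/eqP ? Gz]|/andP[/andP[/eqP ? Tz] Dz]]; subst; try lia.
  + have := H3 _ _ _ Gx Gy Gz ltac:(lia). lia.
  + have := inD_3free Dx Dy Dz ltac:(lia). lia.
- move=> y; have [q [r [-> Hr]]] := dm3 y.
  rewrite opGE //= => Hy HG.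
  have HR : r = 0 \/ r = 1 \/ r = 2 by lia.
  case: HR => [Er|[Er|Er]]; subst r.
  + move: HG; rewrite /= orbF => Gq.
    have [a [b [Ga Gb Hb Eab]]] := Hcov q ltac:(lia) Gq.
    exists (3 * a + 0), (3 * b + 0); rewrite !opGE //= Ga Gb; split=> //; lia.
  + move: HG; rewrite /= (_ : t <= q) /=; last lia. move=> Dq.
    have [p0 [p1 [D0 D1 Es Hl Hs]]] := phi_dec (q - t).
    have := Hs Dq => Hlt.
    exists (3 * (t + p0) + 1), (3 * (t + p1) + 1); rewrite !opGE //= !leq_addr !addKn D0 D1.
    split=> //; lia.
  + have [b [a [Db Hb Ga Eab]]] := HQ (q - t).
    exists (3 * a + 0), (3 * (t + b) + 1); rewrite !opGE //= Ga leq_addr addKn Db.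
    split=> //; lia.
Qed.

Lemma opQ1_1 G t : Q1 G t -> Q1 (opG 1 G t) (3 * t + 1).
Proof.
move=> HQ u; have [q [r [-> Hr]]] := dm3 u.
have [b [a [Db Hb Ga Eab]]] := HQ q.
have [->|[->|->]] : r = 0 \/ r = 1 \/ r = 2 by lia.
- exists (3 * b + 0), (3 * a + 1); rewrite opGE // inD3 //= Db Ga; split=> //; lia.
- exists (3 * b + 0), (3 * a + 0); rewrite opGE // inD3 //= Db Ga; split=> //; lia.
- exists (3 * b + 1), (3 * a + 1); rewrite opGE // inD3 //= Db Ga; split=> //; lia.
Qed.

Lemma opQ1_2 G t : Q1 G t -> G t.+1 -> Q1 (opG 2 G t) (3 * t + 2).
Proof.
move=> HQ HP u; have [q [r [-> Hr]]] := dm3 u.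
have [->|[->|->]] : r = 0 \/ r = 1 \/ r = 2 by lia.
- have [b [a [Db Hb Ga Eab]]] := HQ q.
  exists (3 * b + 0), (3 * a + 2); rewrite opGE // inD3 //= Db Ga; split=> //; lia.
- case: q => [|q].
  + exists 1, (3 * t.+1 + 0); rewrite opGE //= HP; split=> //; lia.
  + have [b [a [Db Hb Ga Eab]]] := HQ q.
    exists (3 * b + 1), (3 * a + 0); rewrite opGE // inD3 //= Db Ga; split=> //; lia.
- have [b [a [Db Hb Ga Eab]]] := HQ q.
  exists (3 * b + 0), (3 * a + 0); rewrite opGE // inD3 //= Db Ga; split=> //; lia.
Qed.

Lemma opQ1_0 G t : Q1 G t -> Q1 (opG 0 G t) (3 * t).
Proof.
move=> HQ u; have [q [r [-> Hr]]] := dm3 u.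
have [->|[->|->]] : r = 0 \/ r = 1 \/ r = 2 by lia.
- have [b [a [Db Hb Ga Eab]]] := HQ q.
  exists (3 * b + 0), (3 * a + 0); rewrite opGE // inD3 //= Db Ga; split=> //; lia.
- have [p0 [p1 [D0 D1 Es Hl _]]] := phi_dec q.
  exists (3 * p1 + 1), (3 * (t + p0) + 1); rewrite opGE // inD3 //= D1 leq_addr addKn D0.
  split=> //; lia.
- have [b [a [Db Hb Ga Eab]]] := HQ q.
  exists (3 * b + 1), (3 * a + 0); rewrite opGE // inD3 //= Db Ga; split=> //; lia.
Qed.

Fixpoint famt (l : seq nat) : nat := if l is c :: l' then 3 * famt l' + c else 0.
Fixpoint famG (l : seq nat) : nat -> bool :=
  if l is c :: l' then opG c (famG l') (famt l') else inD.
Fixpoint famA (l : seq nat) : nat -> bool :=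
  if l is c :: l' then opA c (famA l') else (fun x => x == 0).
Fixpoint valid (l : seq nat) : bool :=
  if l is c :: l' then (c <= 2) && ((c == 2) ==> (head 0 l' != 1)) && valid l' else true.

Lemma fam_inv l : valid l ->
  [/\ isSt (famA l) (famG l) (famt l), Q1 (famG l) (famt l) &
      (head 0 l != 1 -> famG l (famt l).+1)].
Proof.
elim: l => [|c l IH] /=.
- move=> _; split.
  + split=> //.
    * by move=> x; rewrite leqn0 => /eqP ->.
    * by move=> x /eqP ->.
    * by move=> x y z Dx Dy Dz E; apply: (inD_3free Dx Dy Dz E).
    * move=> y _ Dy. have [p0 [p1 [D0 D1 Es Hl Hs]]] := phi_dec y.
      exists p0, p1; split=> //; try exact: Hs; lia.
  + move=> u; have [p0 [p1 [D0 D1 Es Hl Hs]]] := phi_dec u.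
    exists p1, p0; split=> //; lia.
  + by [].
- move=> /andP[/andP[Hc2 Hh] /IH [HS HQ HP]].
  have HR : c = 0 \/ c = 1 \/ c = 2 by lia.
  case: HR => [Ec|[Ec|Ec]]; subst c.
  + split.
    * by rewrite addn0; apply: op0_St.
    * by rewrite addn0; apply: opQ1_0.
    * move=> _; rewrite addn0 -addn1 opGE //= leqnn subnn. by [].
  + split.
    * by apply: opc_St.
    * by apply: opQ1_1.
    * by [].
  + have HP' := HP Hh.
    split.
    * by apply: opc_St.
    * by apply: opQ1_2.
    * move=> _; rewrite (_ : (3 * famt l + 2).+1 = 3 * (famt l).+1 + 0); last lia.
      by rewrite opGE.
Qed.

Definition Per (G : nat -> bool) : Prop := exists J0, forall J, J0 <= J ->
  [/\ (forall y, y < 3^J -> G (3^J + y) = G y),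
      (forall y, 2 * 3^J <= y -> y < 3^J.+1 -> G y = false) &
      count G (iota 0 (3^J)) = 2^J].

Lemma count0 (P : pred nat) m : (forall x, x < m -> P x = false) -> count P (iota 0 m) = 0.
Proof.
move=> H; rewrite (@eq_in_count _ P pred0) ?count_pred0 // => x.
rewrite mem_iota add0n => /andP[_ Hx]; exact: H.
Qed.

Lemma Per_D : Per inD.
Proof.
exists 0 => J _; split.
- by move=> y Hy; apply: inD_shift.
- move=> y H1 H2; apply/negbTE/negP => Dy; exact: (inD_gap Dy H1 H2).
- exact: count_D.
Qed.

Lemma Per_opc c G t : (c == 1) || (c == 2) -> Per G -> Per (opG c G t).
Proof.
move=> Hc [J0 HJ]; exists J0.+1 => [[|J]] // HJJ.
have [Hs Hg Hn] := HJ J HJJ.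
have Hc0 : (c == 0) = false by case/orP: Hc => /eqP ->.
split.
- move=> y; have [q [r [-> Hr]]] := dm3 y => Hy.
  rewrite (_ : 3 ^ J.+1 + (3 * q + r) = 3 * (3 ^ J + q) + r); last by rewrite expnS; lia.
  rewrite !opGE // Hc0 Hs //; move: Hy; rewrite expnS; lia.
- move=> y; have [q [r [-> Hr]]] := dm3 y => H1 H2.
  rewrite opGE // Hc0 Hg ?andbF //; move: H1 H2; rewrite !expnS; lia.
- rewrite expnS count_iota3.
  rewrite (@eq_count _ (fun q => opG c G t (3 * q)) G); last first.
  { move=> q; by rewrite -[3 * q]addn0 opGE // Hc0. }
  rewrite (@eq_count _ (fun q => opG c G t (3 * q + 1)) (fun q => (c == 1) && G q)); last first.
  { move=> q; by rewrite opGE // Hc0 /= eq_sym. }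
  rewrite (@eq_count _ (fun q => opG c G t (3 * q + 2)) (fun q => (c == 2) && G q)); last first.
  { move=> q; by rewrite opGE // Hc0 /= eq_sym. }
  move: Hc => /orP[/eqP ->|/eqP ->] /=;
  rewrite ?(@eq_count _ (fun q => false && G q) pred0) // count_pred0
    ?(@eq_count _ (fun q => true && G q) G) // Hn expnS; lia.
Qed.

Lemma t_small t : 2 * t < 3 ^ t.+1.
Proof. have := ltn_expl t (isT : 1 < 3). rewrite expnS. lia. Qed.

Lemma Per_op0 G t : Per G -> Per (opG 0 G t).
Proof.
move=> [J0 HJ]; exists (maxn J0 t.+1).+1 => [[|J]] // HJJ.
have HJ0 : J0 <= J by move: HJJ; rewrite ltnS geq_max => /andP[].
have Ht : 2 * t < 3^J.
{ have := t_small t. move: HJJ; rewrite ltnS geq_max => /andP[_ H].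
  have := leq_pexp2l (isT : 0 < 3) H. lia. }
have [Hs Hg Hn] := HJ J HJ0.
split.
- move=> y; have [q [r [-> Hr]]] := dm3 y => Hy.
  have Hq : q < 3^J by move: Hy; rewrite expnS; lia.
  rewrite (_ : 3 ^ J.+1 + (3 * q + r) = 3 * (3 ^ J + q) + r); last by rewrite expnS; lia.
  rewrite !opGE //= Hs //.
  have HR : r = 0 \/ r = 1 \/ r = 2 by lia.
  case: HR => [Er|[Er|Er]]; subst r => //.
  rewrite /= (_ : t <= 3^J + q); last lia.
  case: (leqP t q) => Htq /=.
  + by rewrite -addnBA // inD_shift //; lia.
  + apply/negP => D.
    have := inD_bound D (_ : 3^J + q - t < 3^J). lia.
- move=> y; have [q [r [-> Hr]]] := dm3 y => H1 H2.
  have H1' : 2 * 3^J <= q by move: H1; rewrite expnS; lia.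
  have H2' : q < 3^J.+1 by move: H2; rewrite !expnS; lia.
  rewrite opGE //= Hg // andbF /=.
  apply/negP => /andP[/andP[_ _] D].
  case: (leqP (2 * 3^J) (q - t)) => Hqt.
  + exact: (inD_gap D Hqt ltac:(lia)).
  + have Ex : q - t = 3^J + (q - t - 3^J) by lia.
    rewrite Ex inD_shift in D; last lia.
    have := inD_bound D (_ : q - t - 3^J < 3^J). lia.
- rewrite expnS count_iota3.
  rewrite (@eq_count _ (fun q => opG 0 G t (3 * q)) G); last first.
  { move=> q; by rewrite -[3 * q]addn0 opGE //= orbF. }
  rewrite (@eq_count _ (fun q => opG 0 G t (3 * q + 2)) pred0); last first.
  { move=> q; by rewrite opGE. }
  rewrite (@eq_count _ (fun q => opG 0 G t (3 * q + 1)) (fun q => (t <= q) && inD (q - t)));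
    last first.
  { move=> q; by rewrite opGE. }
  rewrite count_pred0 Hn addn0.
  have E1 : 3^J = t + (3^J - t) by lia.
  rewrite E1 count_split count0 ?add0n; last first.
  { move=> x Hx; rewrite (_ : t <= x = false) //; apply/negbTE; rewrite -ltnNge //. }
  rewrite (@eq_count _ (fun x => (t <= t + x) && inD (t + x - t)) inD); last first.
  { move=> x; by rewrite leq_addr addKn. }
  have E2 : count inD (iota 0 (3^J)) = count inD (iota 0 (3^J - t)).
  { rewrite {1}(_ : 3^J = (3^J - t) + t); last lia.
    rewrite count_split (@count0 (fun x => inD (3^J - t + x)) t) ?addn0 // => x Hx.
    apply/negP => D. have := inD_bound D (_ : 3^J - t + x < 3^J). lia. }
  rewrite -E2 count_D expnS; lia.
Qed.

Lemma fam_Per l : valid l -> Per (famG l).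
Proof.
elim: l => [|c l IH] /=; first by move=> _; exact: Per_D.
move=> /andP[/andP[Hc2 _] /IH HP].
have [->|[->|->]] : c = 0 \/ c = 1 \/ c = 2 by lia.
- exact: Per_op0.
- exact: Per_opc.
- exact: Per_opc.
Qed.

Section Enum.
Variable a : nat -> nat.
Hypothesis Ha : forall n, a n < a n.+1.

Lemma a_mono m n : m < n -> a m < a n.
Proof.
elim: n => [|n IH] //; rewrite ltnS leq_eqVlt => /orP[/eqP ->|/IH H]; first exact: Ha.
exact: ltn_trans H (Ha n).
Qed.

Lemma a_le m n : m <= n -> a m <= a n.
Proof. rewrite leq_eqVlt => /orP[/eqP ->//|/a_mono/ltnW //]. Qed.

Lemma a_inj m n : a m = a n -> m = n.
Proof.
move=> E; case: (ltngtP m n) => // H; have := a_mono H; lia.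
Qed.

Lemma a_ge n : n <= a n.
Proof. elim: n => [|n IH] //; have := Ha n; lia. Qed.

Lemma a_lt_iff m n : (a m < a n) = (m < n).
Proof.
case: (ltnP m n) => H; first by rewrite (a_mono H).
by apply/negbTE; rewrite -leqNgt; apply: a_le.
Qed.

Lemma a_search y : a 0 <= y -> exists n, a n <= y < a n.+1.
Proof.
move=> H0.
suff : forall m, y < a m -> exists n, a n <= y < a n.+1.
{ move=> H; apply: (H y.+1); have := a_ge y.+1; lia. }
elim=> [|m IH] Hm; first lia.
case: (ltnP y (a m)) => Hy; first exact: IH.
by exists m; rewrite Hy.
Qed.

Variable G : nat -> bool.
Hypothesis HG : forall y, G y <-> exists n, a n = y.

Lemma count_a n : count G (iota 0 (a n)) = n.
Proof.
elim: n => [|n IH].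
- apply: count0 => x Hx; apply/negP => /HG [m Em].
  have := a_le (leq0n m); lia.
- rewrite (_ : a n.+1 = a n + (a n.+1 - a n)); last by have := Ha n; lia.
  rewrite count_split IH.
  rewrite (_ : a n.+1 - a n = 1 + (a n.+1 - a n - 1)); last by have := Ha n; lia.
  rewrite count_split /= !addn0.
  rewrite (_ : G (a n) = true); last by apply/HG; exists n.
  rewrite count0; first lia.
  move=> x Hx; apply/negP => /HG [m Em].
  have H1 : a n < a m by lia.
  have H2 : a m < a n.+1 by lia.
  rewrite !a_lt_iff in H1 H2; lia.
Qed.

Lemma count_a_inv y : G y -> a (count G (iota 0 y)) = y.
Proof. by move=> /HG [n <-]; rewrite count_a. Qed.

Lemma count_mono x y : x <= y -> count G (iota 0 x) <= count G (iota 0 y).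
Proof.
move=> H; rewrite (_ : y = x + (y - x)); last lia.
rewrite count_split; lia.
Qed.

Lemma indep_gen : G 0 -> Per G -> independent a.
Proof.
move=> G0 [J0 HJ].
have key : forall J, J0 <= J -> forall i, i < 2^J -> a (2^J + i) = 3^J + a i.
{ move=> J HJJ i Hi; have [Hs Hg Hn] := HJ J HJJ.
  have Gai : G (a i) by apply/HG; exists i.
  have Hai : a i < 3^J.
  { rewrite ltnNge; apply/negP => H; have := count_mono H; rewrite count_a Hn; lia. }
  have G1 : G (3^J + a i) by rewrite Hs.
  rewrite -(count_a_inv G1) count_split Hn.
  rewrite (@eq_in_count _ (fun x => G (3^J + x)) G); first by rewrite count_a.
  move=> x; rewrite mem_iota add0n => /andP[_ Hx]; apply: Hs; lia. }
have a0 : a 0 = 0.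
{ have := count_a_inv G0. by rewrite /= => ->. }
have ap : forall J, J0 <= J -> a (2^J) = 3^J.
{ move=> J HJJ; have := key J HJJ 0 (expn_gt0 2 J). by rewrite addn0 a0 addn0. }
pose lam : int := (2 * Posz (a (2^J0).-1) + 1 - Posz (3^J0))%R.
exists lam, J0 => J HJJ /=; split.
- move=> i Hi; rewrite (key J HJJ i Hi) (ap J HJJ) //.
- rewrite (ap J HJJ).
  have Hn : (2 * a (2^J).-1 + 3^J0 = 2 * a (2^J0).-1 + 3^J)%N.
  { elim: J HJJ => [|J IH]; first by rewrite leqn0 => /eqP ->.
    rewrite leq_eqVlt => /orP[/eqP <-//|]; rewrite ltnS => HJJ.
    have E : (2^J.+1).-1 = 2^J + (2^J).-1 by rewrite expnS; have := expn_gt0 2 J; lia.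
    rewrite E key //; last by have := expn_gt0 2 J; lia.
    have := IH HJJ; rewrite expnS; lia. }
  rewrite /lam; lia.
Qed.
End Enum.

Lemma enum_ex (G : nat -> bool) : G 0 -> (forall y, exists x, y < x /\ G x) ->
  exists a : nat -> nat, [/\ forall n, a n < a n.+1 &
     forall y, G y <-> exists n, a n = y].
Proof.
move=> G0 Hunb.
have exP : forall y, exists x, (y < x) && G x.
{ move=> y; have [x [H1 H2]] := Hunb y; exists x; by rewrite H1 H2. }
pose nxt y := ex_minn (exP y).
have nxtP : forall y, [/\ y < nxt y, G (nxt y) & forall z, y < z -> G z -> nxt y <= z].
{ move=> y; rewrite /nxt; case: ex_minnP => m /andP[H1 H2] Hmin; split=> // z Hz Gz.
  apply: Hmin; by rewrite Hz Gz. }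
pose a n := iter n nxt 0.
have Ha : forall n, a n < a n.+1 by move=> n /=; have [] := nxtP (a n).
have Ga : forall n, G (a n) by case=> [|n] //=; have [] := nxtP (a n).
have Gap : forall n y, a n < y -> y < a n.+1 -> ~~ G y.
{ move=> n y H1 H2; apply/negP => Gy; have [_ _ Hm] := nxtP (a n).
  have := Hm y H1 Gy; rewrite /= in H2; lia. }
exists a; split=> // y; split; last by move=> [n <-].
move=> Gy; have [n /andP[H1 H2]] := a_search Ha (leq0n y).
case: (ltngtP (a n) y) => E; [|lia|by exists n].
by have := Gap n y E H2; rewrite Gy.
Qed.

Lemma threefree_of (G : nat -> bool) (P : nat -> Prop) :
  (forall x y z, G x -> G y -> G z -> x + z = 2 * y -> x = z) ->
  (forall x, P x -> G x) -> threefree P.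
Proof.
move=> H3 HP x y z Hxy Hyz Px Py Pz E.
have := H3 x y z (HP _ Px) (HP _ Py) (HP _ Pz) E. lia.
Qed.

Lemma stanley_exists (P : nat -> Prop) (A G : nat -> bool) t :
  (forall x, P x <-> A x) -> isSt A G t -> Per G -> G 0 -> exists a, stanley_of P a.
Proof.
move=> HPA [Hi HAt HAm H3 Hcov] [J0 HJ] G0.
have Hunb : forall y, exists x, y < x /\ G x.
{ move=> y; exists (3 ^ (J0 + y)); split.
  - have := ltn_expl (J0 + y) (isT : 1 < 3); lia.
  - have [Hs _ _] := HJ (J0 + y) (leq_addr _ _).
    by rewrite -[3 ^ _]addn0 Hs ?expn_gt0. }
have [a [Ha HG]] := enum_ex G0 Hunb.
have Gt : G t by rewrite Hi.
pose k := count G (iota 0 t).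
have ak : a k = t by apply: count_a_inv.
exists a, k; split; [|split].
- move=> i j /andP[Hij _]; exact: a_mono.
- move=> x; rewrite HPA; split.
  + move=> Ax; have Hx := HAm _ Ax.
    have Gx : G x by rewrite Hi.
    have [i Ei] := (HG x).1 Gx.
    exists i => //; rewrite leqNgt -(a_lt_iff Ha) ak; lia.
  + move=> [i Hi' <-]; rewrite -Hi; first by apply/HG; exists i.
    rewrite -ak; exact: a_le.
- move=> n Hn; split; first exact: Ha.
  + apply: (threefree_of H3) => x [i _ <-]; by apply/HG; exists i.
  + move=> y H1 H2 Htf.
    have Gy : ~~ G y.
    { apply/negP => /HG [m Em]; subst y.
      rewrite !(a_lt_iff Ha) in H1 H2; lia. }
    have Hty : t < y by rewrite -ak; have := a_le Ha Hn; lia.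
    have [x [w [Gx Gw Hw E]]] := Hcov y Hty Gy.
    have [i Ei] := (HG x).1 Gx; have [j Ej] := (HG w).1 Gw.
    apply: (Htf x w y); try lia.
    * left; exists i => //. rewrite -ltnS -(a_lt_iff Ha); lia.
    * left; exists j => //. rewrite -ltnS -(a_lt_iff Ha); lia.
    all: try by right.
Qed.

Lemma stanley_range (P : nat -> Prop) (A G : nat -> bool) t a :
  (forall x, P x <-> A x) -> isSt A G t -> stanley_of P a ->
  (forall n, a n < a n.+1) /\ (forall y, G y <-> exists n, a n = y).
Proof.
move=> HPA [Hi HAt HAm H3 Hcov] [k [Hinc [HP Hgr]]].
have Ha : forall n, a n < a n.+1.
{ move=> n; case: (ltnP n k) => Hn; first by apply: Hinc; rewrite ltnSn.
  by have [] := Hgr n Hn. }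
split=> //.
have ak : a k = t.
{ have [i Hik Ei] := (HP t).1 ((HPA t).2 HAt).
  have Hak : A (a k) by apply/HPA/HP; exists k.
  have := HAm _ Hak; have := a_le Ha Hik; lia. }
have Gt : G t by rewrite Hi.
elim/inD_ind => y IH.
case: (leqP y t) => Hyt.
- rewrite Hi //; split.
  + move=> Ay; have [i Hi' Ei] := (HP y).1 ((HPA y).2 Ay); by exists i.
  + move=> [n En]; apply/HPA/HP; exists n => //.
    rewrite leqNgt -(a_lt_iff Ha) ak; lia.
- have H0y : a 0 <= y by have := a_le Ha (leq0n k); lia.
  have [n /andP[H1 H2]] := a_search Ha H0y.
  have Hkn : k <= n.
  { rewrite leqNgt; apply/negP => H; have := a_le Ha H; rewrite ak; lia. }
  case: (ltngtP (a n) y) => E; last first.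
  +
    split; first by exists n.
    move=> _; apply/negPn/negP => NG.
    have [x [w [Gx Gw Hw Exy]]] := Hcov y Hyt NG.
    have [i Ei] := (IH x ltac:(lia)).1 Gx; have [j Ej] := (IH w Hw).1 Gw.
    case: n Hkn E H1 H2 => [|m] Hkn E H1 H2.
    * have : k = 0 by lia. move=> Ek; subst k; lia.
    * have Hkm : k <= m.
      { rewrite leqNgt; apply/negP => H.
        have Ek : k = m.+1 by lia.
        subst k; lia. }
      have [_ Htf _] := Hgr m Hkm.
      apply: (Htf x w y); try lia.
      -- exists i => //; rewrite leqNgt -(a_lt_iff Ha); lia.
      -- exists j => //; rewrite leqNgt -(a_lt_iff Ha); lia.
      all: try by exists m.+1.
  + lia.
  +
    split; last first.
    { move=> [m Em]; subst y; rewrite !(a_lt_iff Ha) in E H2; lia. }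
    move=> Gy; exfalso.
    have [_ _ Hnt] := Hgr n Hkn.
    apply: (Hnt y E H2) => x1 x2 x3 H12 H23 Q1 Q2 Q3 Ex.
    have Gq : forall z, (prefix_set a n z \/ z = y) -> G z.
    { move=> z [[i Hi' <-]|->] //.
      have Hay : a i < y by have := a_le Ha Hi'; lia.
      by apply/(IH _ Hay); exists i. }
    have := H3 _ _ _ (Gq _ Q1) (Gq _ Q2) (Gq _ Q3) Ex. lia.
Qed.

Lemma famA_digits l x : all (fun c => c <= 2) l ->
  famA l x <-> exists f : nat -> nat,
    (forall i, i < size l -> f i = 0 \/ f i = nth 0 l i) /\
    x = \sum_(i < size l) f i * 3 ^ i.
Proof.
elim: l x => [|c l IH] x /=.
- move=> _; split.
  + move=> /eqP ->; exists (fun _ => 0); split=> //; by rewrite big_ord0.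
  + by move=> [f [_ ->]]; rewrite big_ord0.
- move=> /andP[Hc Hl].
  have [q [r [-> Hr]]] := dm3 x.
  rewrite opAE //; split.
  + move=> /andP[Hrc /(IH _ Hl) [f [Hf Eq]]].
    exists (fun i => if i is i'.+1 then f i' else r); split.
    * case=> [|i] /= Hi; last exact: Hf.
      by move: Hrc => /orP[/eqP ->|/andP[_ /eqP ->]]; [left|right].
    * rewrite big_ord_recl /= expn0 muln1 Eq big_distrr /= addnC; congr (_ + _).
      apply: eq_bigr => i _; by rewrite /bump /= expnS add0n mulnCA.
  + move=> [f [Hf Ex]].
    move: Ex; rewrite big_ord_recl /= expn0 muln1.
    under eq_bigr do rewrite /bump /= expnS mulnCA add1n.
    rewrite -big_distrr /= => Ex.
    have Hf0 := Hf 0 (ltn0Sn _); rewrite /= in Hf0.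
    have Hr' : r = f 0 /\ q = \sum_(i < size l) f i.+1 * 3 ^ i.
    { have Hf0' : f 0 < 3 by move: Hf0 => [->|->] //; lia.
      move: Ex; set S := \sum_(i < _) _ => Ex; split; lia. }
    case: Hr' => Er Eq; apply/andP; split.
    * rewrite Er; case: Hf0 => ->; first by rewrite eqxx.
      rewrite eqxx andbT; exact: orbN.
    * apply/IH => //; exists (fun i => f i.+1); split=> // i Hi.
      exact: (Hf i.+1).
Qed.

Definition typ (k : nat) (T1 T2 : {set 'I_k.+1}) (i : nat) : nat :=
  if (inord i : 'I_k.+1) \in T1 then 1 else if (inord i : 'I_k.+1) \in T2 then 2 else 0.

Lemma typ_le (k : nat) (T1 T2 : {set 'I_k.+1}) i : typ T1 T2 i <= 2.
Proof. rewrite /typ; by case: ifP => //; case: ifP. Qed.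

Lemma valid_typ k (T1 T2 : {set 'I_k.+1}) :
  [disjoint T1 & T2] ->
  (forall t : 'I_k.+1, t \in T1 -> forall u : 'I_k.+1, u \in T2 -> val t <> (val u).+1) ->
  forall n m, m + n <= k.+1 -> valid [seq typ T1 T2 i | i <- iota m n].
Proof.
move=> Hdis Hcond; elim=> [|n IH] m Hmn //=.
rewrite typ_le IH /=; last lia.
rewrite andbT; apply/implyP => /eqP H2.
case: n IH Hmn => [|n] IH Hmn //=.
apply/eqP => H1.
move: H2 H1; rewrite /typ.
case: ifP => // Hm1; case: ifP => // Hm2 _.
case: ifP => Hs1; last by case: ifP.
move=> _; apply: (Hcond _ Hs1 _ Hm2).
have E1 : val (inord m.+1 : 'I_k.+1) = m.+1 by apply: inordK; lia.
have E2 : val (inord m : 'I_k.+1) = m by apply: inordK; lia.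
by rewrite E1 E2.
Qed.

Lemma setA_fam k (T1 T2 : {set 'I_k.+1}) x :
  [disjoint T1 & T2] ->
  setA T1 T2 x <-> famA [seq typ T1 T2 i | i <- iota 0 k.+1] x.
Proof.
move=> Hdis.
have Hall : all (fun c => c <= 2) [seq typ T1 T2 i | i <- iota 0 k.+1].
{ by apply/allP => c /mapP [i _ ->]; apply: typ_le. }
rewrite famA_digits // size_map size_iota.
have Hnth : forall i, i < k.+1 -> nth 0 [seq typ T1 T2 i | i <- iota 0 k.+1] i = typ T1 T2 i.
{ move=> i Hi; rewrite (nth_map 0) ?size_iota // nth_iota //. }
split.
- move=> [S1 [S2 [H1 H2 ->]]].
  exists (fun i => ((inord i : 'I_k.+1) \in S1) + 2 * ((inord i : 'I_k.+1) \in S2)); split.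
  + move=> i Hi; rewrite Hnth // /typ.
    case E1: ((inord i : 'I_k.+1) \in S1).
    * have T1i : (inord i : 'I_k.+1) \in T1 by apply: (subsetP H1).
      have NS2 : (inord i : 'I_k.+1) \in S2 = false.
      { apply/negbTE/negP => /(subsetP H2) T2i.
        by rewrite (disjointFr Hdis T1i) in T2i. }
      by rewrite T1i NS2; right.
    * case E2: ((inord i : 'I_k.+1) \in S2).
      -- have T2i : (inord i : 'I_k.+1) \in T2 by apply: (subsetP H2).
         have NT1 : (inord i : 'I_k.+1) \in T1 = false.
         { apply/negbTE/negP => T1i.
           by rewrite (disjointFr Hdis T1i) in T2i. }
         by rewrite NT1 T2i; right.
      -- by left.
  + rewrite big_distrr /= (big_mkcond (fun i => i \in S1)) (big_mkcond (fun i => i \in S2)).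
    rewrite -big_split /=; apply: eq_bigr => i _.
    rewrite inord_val; case: (i \in S1); case: (i \in S2) => /=; lia.
- move=> [f [Hf ->]].
  exists [set j : 'I_k.+1 | f j == 1], [set j : 'I_k.+1 | f j == 2]; split.
  + apply/subsetP => j; rewrite inE => /eqP Ej.
    have := Hf j (ltn_ord j); rewrite Hnth // /typ inord_val Ej.
    by case=> //; case: ifP => //; case: ifP.
  + apply/subsetP => j; rewrite inE => /eqP Ej.
    have := Hf j (ltn_ord j); rewrite Hnth // /typ inord_val Ej.
    by case=> //; case: ifP => //; case: ifP.
  + rewrite big_distrr /= (big_mkcond (fun i => i \in _)) (big_mkcond (fun i => i \in _)).
    rewrite -big_split /=; apply: eq_bigr => i _.
    rewrite !inE.
    have : f i <= 2.
    { have := Hf i (ltn_ord i); rewrite Hnth //; have := typ_le T1 T2 i; lia. }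
    case: (f i) => [|[|[|]]] //=.
Qed.

Unset Implicit Arguments.

Theorem theorem3 (k : nat) (T1 T2 : {set 'I_k.+1}) :
  0 < k ->
  [disjoint T1 & T2] ->
  (forall t : 'I_k.+1, t \in T1 -> forall u : 'I_k.+1, u \in T2 -> val t <> (val u).+1) ->
  threefree (setA T1 T2) /\
  (exists a, stanley_of (setA T1 T2) a) /\
  (forall a, stanley_of (setA T1 T2) a -> independent a).
Proof.
move=> Hk Hdis Hcond.
pose l := [seq typ T1 T2 i | i <- iota 0 k.+1].
have Hv : valid l by apply: (valid_typ Hdis Hcond); rewrite add0n.
have [HS HQ HP] := fam_inv Hv.
have HPer := fam_Per Hv.
have HPA : forall x, setA T1 T2 x <-> famA l x by move=> x; apply: setA_fam.
have A0 : famA l 0.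
{ apply/HPA; exists set0, set0; split; rewrite ?sub0set //.
  by rewrite !big_set0. }
have G0 : famG l 0.
{ case: HS => Hi _ HAm _ _; rewrite Hi //; exact: HAm. }
split; [|split].
- case: HS => Hi _ HAm H3 _.
  apply: (threefree_of H3) => x /HPA Ax; rewrite Hi //; exact: HAm.
- exact: stanley_exists HPA HS HPer G0.
- move=> a Ha; have [Hinc HG] := stanley_range HPA HS Ha.
  exact: (indep_gen Hinc HG G0 HPer).
Qed.
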